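(* Let $S$ be a set of bilabelled graphs such that for every $(K,\mathbf{a},\mathbf{b})\in S$ every vertex of $K$ occurs among the entries of $\mathbf{a}$ or $\mathbf{b}$. Let $\langle \mathbf{P}_{\mathrm{gt}},S\rangle$ denote the graph category generated by $S\cup\{\mathbf{P}_{\mathrm{gt}}\}$. Then $\langle \mathbf{P}_{\mathrm{gt}},S\rangle$ is a group-theoretical graph category. Consequently, $\langle \mathbf{P}_{\mathrm{gt}},S\rangle$ equals the group-theoretical graph category generated by $S$ (the smallest group-theoretical graph category containing $S$).
   Context: Graphs are finite, undirected, without multiple edges, loops allowed, considered up to isomorphism; $N_k$ is the edgeless graph on $k$ vertices. Bilabelled graph: $(K,\mathbf{a},\mathbf{b})$ with $K$ a graph, $\mathbf{a}\in V(K)^k$ (inputs), $\mathbf{b}\in V(K)^l$ (outputs), up to isomorphism of $K$ preserving the tuples. Operations: tensor product $(K,\mathbf{a},\mathbf{b})\otimes(H,\mathbf{c},\mathbf{d})=(K\sqcup H,\mathbf{a}\mathbf{c},\mathbf{b}\mathbf{d})$; composition (for $|\mathbf{b}|=|\mathbf{c}|$) $(H,\mathbf{c},\mathbf{d})\cdot(K,\mathbf{a},\mathbf{b})=(H\cdot K,\mathbf{a},\mathbf{d})$ where $H\cdot K$ is obtained from $K\sqcup H$ by identifying $b_i$ with $c_i$ for all $i$ (ignoring edge multiplicities); involution $(K,\mathbf{a},\mathbf{b})^*=(K,\mathbf{b},\mathbf{a})$. For a partition $\pi$ of $V(K)$, $K/\pi$ has the blocks as vertices with an edge between two (possibly equal)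 blocks iff $K$ has an edge between some of their elements, $q_\pi$ the quotient map, and $(K,\mathbf{a},\mathbf{b})/\pi:=(K/\pi,q_\pi(\mathbf{a}),q_\pi(\mathbf{b}))$. Let $\mathbf{0}=(N_0,\emptyset,\emptyset)$ and $\mathbf{M}^{k,l}=(M,(v,\dots,v),(v,\dots,v))$ for the one-vertex loopless graph $M$ with vertex $v$ ($k$ inputs, $l$ outputs). A graph category is a set of bilabelled graphs containing $\mathbf{M}^{1,1},\mathbf{M}^{0,2},\mathbf{0}$ and closed under tensor products, compositions and involution; it is group-theoretical if it is also closed under all quotients $\mathbf{K}\mapsto\mathbf{K}/\pi$. $\mathbf{P}_{\mathrm{gt}}$ denotes the bilabelled graph $(N_2,(x,y,y),(y,y,x))$, where $N_2$ has the two vertices $x,y$ and no edges. *)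

(* Defs.v *)
From mathcomp Require Import all_boot all_order.
Set Implicit Arguments. Unset Strict Implicit. Unset Printing Implicit Defensive.

(* A bilabelled graph (K, a, b): finite vertex type, adjacency relation
   (interpreted symmetrically, loops allowed, via [bedge]), inputs, outputs. *)
Record bgraph := BG {
  bV : finType;
  badj : rel bV;
  binp : seq bV;
  bout : seq bV }.

Definition bedge (K : bgraph) : rel (bV K) := fun x y => badj x y || badj y x.

Definition bg_iso (G H : bgraph) : Prop :=
  exists f : bV G -> bV H,
    [/\ bijective f,
        (forall x y, bedge (f x) (f y) = bedge x y),
        map f (binp G) = binp H &
        map f (bout G) = bout H].

(* Sets of bilabelled graphs are sets of isomorphism classes, i.e.
   isomorphism-closed predicates on representatives. *)
Definition iso_closed (C : bgraph -> Prop) : Prop :=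
  forall G H, bg_iso G H -> C G -> C H.

Definition btensor (K H : bgraph) : bgraph :=
  @BG (bV K + bV H)%type
    (fun u v => match u, v with
                | inl a, inl b => badj a b
                | inr a, inr b => badj a b
                | _, _ => false end)
    (map inl (binp K) ++ map inr (binp H))
    (map inl (bout K) ++ map inr (bout H)).

Definition binv (K : bgraph) : bgraph := @BG (bV K) (@badj K) (bout K) (binp K).

(* Vertices are the blocks; two (possibly equal) blocks are adjacent iff K has
   an edge between some of their elements; labels are mapped by x |-> block of x. *)
Definition qV (T : finType) (P : {set {set T}}) : finType :=
  {B : {set T} | B \in P}.

Definition qmap (T : finType) (P : {set {set T}}) (x : T) : option (qV P) :=
  insub (pblock P x).

Definition bquot (K : bgraph) (P : {set {set bV K}}) : bgraph :=
  @BG (qV P)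
    (fun B C => [exists x in val B, exists y in val C, bedge x y])
    (pmap (@qmap _ P) (binp K))
    (pmap (@qmap _ P) (bout K)).

(* Composition H . K (requires size (bout K) = size (binp H)): identify the
   i-th output of K with the i-th input of H in the disjoint union K + H. *)
Definition bunion_io (K H : bgraph) : bgraph :=
  @BG (bV K + bV H)%type (@badj (btensor K H))
    (map inl (binp K)) (map inr (bout H)).

Definition glue_rel (K H : bgraph) : rel (bV K + bV H)%type :=
  fun u v => ((u, v) \in zip (map inl (bout K)) (map inr (binp H)))
          || ((v, u) \in zip (map inl (bout K)) (map inr (binp H))).

Definition bcomp (H K : bgraph) : bgraph :=
  @bquot (bunion_io K H)
    (equivalence_partition (connect (@glue_rel K H)) [set: (bV K + bV H)%type]).

Definition bM (k l : nat) : bgraph :=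
  @BG unit (fun _ _ => false) (nseq k tt) (nseq l tt).

Definition bzero : bgraph := @BG void (fun _ _ => false) [::] [::].

(* P_gt = (N_2, (x,y,y), (y,y,x)) with x = false, y = true. *)
Definition bPgt : bgraph :=
  @BG bool (fun _ _ => false) [:: false; true; true] [:: true; true; false].

Definition graph_category (C : bgraph -> Prop) : Prop :=
  [/\ iso_closed C,
      [/\ C (bM 1 1), C (bM 0 2) & C bzero],
      (forall K H, C K -> C H -> C (btensor K H)),
      (forall H K, C H -> C K -> size (bout K) = size (binp H) -> C (bcomp H K)) &
      (forall K, C K -> C (binv K))].

Definition group_theoretical (C : bgraph -> Prop) : Prop :=
  graph_category C /\
  forall (K : bgraph) (P : {set {set bV K}}),
    C K -> partition P [set: bV K] -> C (bquot P).

Definition gen_cat (S : bgraph -> Prop) : bgraph -> Prop :=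
  fun G => forall C, graph_category C -> (forall H, S H -> C H) -> C G.

Definition gen_gt_cat (S : bgraph -> Prop) : bgraph -> Prop :=
  fun G => forall C, group_theoretical C -> (forall H, S H -> C H) -> C G.

(* Main.v *)
Require Import Defs.
From mathcomp Require Import all_boot fingraph.
Set Implicit Arguments. Unset Strict Implicit. Unset Printing Implicit Defensive.

Lemma bedgeC (K : bgraph) (x y : bV K) : bedge x y = bedge y x.
Proof. by rewrite /bedge orbC. Qed.

Lemma quot_iso (K Z : bgraph) (P : {set {set bV K}}) (f : bV K -> bV Z) (c : bV Z -> bV K) :
  partition P [set: bV K] ->
  (forall z, f (c z) = z) ->
  (forall x y, (f x == f y) = (y \in pblock P x)) ->
  (forall z1 z2, bedge z1 z2 = [exists x, exists y, [&& f x == z1, f y == z2 & bedge x y]]) ->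
  map f (binp K) = binp Z -> map f (bout K) = bout Z ->
  bg_iso (bquot P) Z.
Proof.
move=> partP fc Hf He Hi Ho.
case/and3P: partP => /eqP covP tiP nzP.
have memP x : pblock P x \in P by rewrite pblock_mem // covP inE.
pose h z : qV P := Sub (pblock P (c z)) (memP (c z)).
have pbf x : pblock P x = pblock P (c (f x)).
  apply/esym/same_pblock => //; by rewrite -Hf fc.
have inpb x y : (x \in val (h y)) = (f x == y).
  by rewrite /= -Hf fc eq_sym.
have hinj : injective h.
  move=> z1 z2 /(congr1 val) /= e.
  have : c z2 \in pblock P (c z1) by rewrite e mem_pblock covP inE.
  by rewrite -Hf !fc => /eqP.
have hsurj B : B \in codom h.
  have : val B != set0 by apply: contraNneq nzP => <-; exact: valP.
  case/set0Pn => x xB; apply/codomP; exists (f x); apply: val_inj => /=.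
  by rewrite -pbf; symmetry; exact: (def_pblock tiP (valP B) xB).
pose g B := iinv (hsurj B).
have gK : cancel g h by move=> B; exact: f_iinv.
have hK : cancel h g by move=> z; apply: hinj; rewrite gK.
have qm x : qmap P x = Some (h (f x)).
  rewrite /qmap; case: insubP => [B0 _ eB|]; last by rewrite memP.
  by congr Some; apply: val_inj; rewrite eB /= pbf.
have pm s : pmap (qmap P) s = map h (map f s).
  by elim: s => //= x s IH; rewrite qm /= IH.
have Eadj z1 z2 : [exists x in val (h z1), exists y in val (h z2), bedge x y]
      = [exists x, exists y, [&& f x == z1, f y == z2 & bedge x y]].
  apply/existsP/existsP => [[x /andP[xin /existsP[y /andP[yin exy]]]] | [x /existsP[y /and3P[fx fy exy]]]].
    by exists x; apply/existsP; exists y; rewrite -!inpb xin yin.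
  by exists x; rewrite inpb fx; apply/existsP; exists y; rewrite inpb fy.
have hE z1 z2 : @bedge (bquot P) (h z1) (h z2) = bedge z1 z2.
  rewrite He /bedge /= !Eadj; apply/orb_idr => /existsP[x /existsP[y /and3P[fx fy exy]]].
  by apply/existsP; exists y; apply/existsP; exists x; rewrite fx fy bedgeC.
exists g; split.
- by exists h.
- by move=> x y; rewrite -{2}(gK x) -{2}(gK y) hE.
- by rewrite /= pm mapK.
- by rewrite /= pm mapK.
Qed.

Lemma zip_map_eq (A B : eqType) (f : A -> B) (s t : seq A) a b :
  map f s = map f t -> (a, b) \in zip s t -> f a = f b.
Proof.
elim: s t => [|x s IH] [|y t] //= [e1 e2]; rewrite in_cons => /orP[/eqP[-> ->] //|].
exact: IH.
Qed.

Lemma comp_iso (H K Z : bgraph) (f : bV K + bV H -> bV Z) (c : bV Z -> bV K + bV H) :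
  (forall z, f (c z) = z) ->
  (forall u, connect (@glue_rel K H) u (c (f u))) ->
  map (f \o inl) (bout K) = map (f \o inr) (binp H) ->
  (forall z1 z2, bedge z1 z2 = [exists u, exists v, [&& f u == z1, f v == z2 & @bedge (bunion_io K H) u v]]) ->
  map (f \o inl) (binp K) = binp Z -> map (f \o inr) (bout H) = bout Z ->
  bg_iso (bcomp H K) Z.
Proof.
move=> fc Hp Hg He Hi Ho.
have gsym : symmetric (@glue_rel K H) by move=> u v; rewrite /glue_rel orbC.
have csym := sym_connect_sym gsym.
have eqR : {in [set: bV K + bV H] & &, equivalence_rel (connect (@glue_rel K H))}.
  move=> x y z _ _ _; split; first exact: connect0.
  by move=> cxy; apply: same_connect.
have gl u v : glue_rel u v -> f u = f v.
  have E : map f (map inl (bout K)) = map f (map inr (binp H)) by rewrite -!map_comp.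
  rewrite /glue_rel => /orP[] /(zip_map_eq E) //; exact: esym.
have cf u v : connect (@glue_rel K H) u v -> f u = f v.
  move/connectP => [p pth ->]; elim: p u pth => //= w p IH u /andP[guw pth].
  by rewrite (gl _ _ guw); exact: IH.
apply: (@quot_iso (bunion_io K H) Z _ f c) => //.
- exact: equivalence_partitionP.
- move=> x y; rewrite pblock_equivalence_partition ?inE //.
  apply/eqP/idP => [e|]; last exact: cf.
  apply: connect_trans (Hp x) _; rewrite e csym; exact: Hp.
- by rewrite /= -map_comp.
- by rewrite /= -map_comp.
Qed.

Lemma zip_map2 (A B A' B' : Type) (f : A -> A') (g : B -> B') s t :
  zip (map f s) (map g t) = map (fun p => (f p.1, g p.2)) (zip s t).
Proof. by elim: s t => [|x s IH] [|y t] //=; rewrite IH. Qed.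

Lemma glueP (K H : bgraph) x y :
  (x, y) \in zip (bout K) (binp H) -> @glue_rel K H (inl x) (inr y).
Proof.
move=> xy; apply/orP; left; rewrite zip_map2.
exact: (map_f (fun p => (inl p.1, inr p.2)) xy).
Qed.

Lemma zip_tnth (T : eqType) (s : seq T) (i : 'I_(size s)) :
  (i, tnth (in_tuple s) i) \in zip (enum 'I_(size s)) s.
Proof.
have := zip_map id (tnth (in_tuple s)) (enum 'I_(size s)).
rewrite map_id map_tnth_enum => ->.
exact: (map_f (fun j => (j, tnth (in_tuple s) j)) (mem_enum _ i)).
Qed.

Lemma mem_zip_cat (A B : eqType) (s1 s2 : seq A) (t1 t2 : seq B) p :
  size s1 = size t1 -> (p \in zip s1 t1) || (p \in zip s2 t2) -> p \in zip (s1 ++ s2) (t1 ++ t2).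
Proof. by move=> e; rewrite zip_cat // mem_cat. Qed.

Lemma mem_zip_map (A B A' B' : eqType) (f : A -> A') (g : B -> B') s t x y :
  (x, y) \in zip s t -> (f x, g y) \in zip (map f s) (map g t).
Proof. by move=> xy; rewrite zip_map2; exact: (map_f (fun p => (f p.1, g p.2)) xy). Qed.

Lemma zip_partner (A B : eqType) (s : seq A) (t : seq B) y :
  size s = size t -> y \in t -> exists2 x, x \in s & (x, y) \in zip s t.
Proof.
elim: s t => [|x s IH] [|y' t] //= [e]; rewrite in_cons => /orP[/eqP->|yt].
  by exists x; rewrite !in_cons eqxx.
have [x' xs xy] := IH _ e yt; exists x'; by rewrite in_cons ?xs ?xy orbT.
Qed.

Lemma zip_partnerl (A B : eqType) (s : seq A) (t : seq B) x :
  size s = size t -> x \in s -> exists2 y, y \in t & (x, y) \in zip s t.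
Proof.
elim: s t => [|x0 s IH] [|y' t] //= [e]; rewrite in_cons => /orP[/eqP->|xs].
  by exists y'; rewrite !in_cons eqxx.
have [y yt xy] := IH _ e xs; exists y; by rewrite in_cons ?yt ?xy orbT.
Qed.

Lemma comp_iso2 (H K Z : bgraph) (f : bV K + bV H -> bV Z) (c : bV Z -> bV K + bV H) :
  size (bout K) = size (binp H) ->
  (forall z, f (c z) = z) ->
  (forall x, connect (@glue_rel K H) (inl x) (c (f (inl x)))) ->
  (forall y, y \notin binp H -> connect (@glue_rel K H) (inr y) (c (f (inr y)))) ->
  map (f \o inl) (bout K) = map (f \o inr) (binp H) ->
  (forall z1 z2, bedge z1 z2 = [exists u, exists v, [&& f u == z1, f v == z2 & @bedge (bunion_io K H) u v]]) ->
  map (f \o inl) (binp K) = binp Z -> map (f \o inr) (bout H) = bout Z ->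
  bg_iso (bcomp H K) Z.
Proof.
move=> sz fc Hk Hh Hg; apply: comp_iso => //.
case=> [x|y]; first exact: Hk.
have [yin|] := boolP (y \in binp H); last exact: Hh.
have [x xin xy] := zip_partner sz yin.
have E : f (inl x) = f (inr y).
  have E' : map f (map inl (bout K)) = map f (map inr (binp H)) by rewrite -!map_comp.
  by apply: (zip_map_eq E'); exact: mem_zip_map.
apply: (@connect_trans _ _ (inl x)).
  by apply: connect1; move: (glueP xy); rewrite /glue_rel orbC.
by rewrite -E; exact: Hk.
Qed.

Definition nof (T : Type) : rel T := fun _ _ => false.
Arguments nof {T}.

Definition tpow (k l n : nat) : bgraph :=
  @BG 'I_n nof (flatten [seq nseq k i | i <- enum 'I_n]) (flatten [seq nseq l i | i <- enum 'I_n]).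

Definition idn n : bgraph := @BG 'I_n nof (enum 'I_n) (enum 'I_n).

Lemma flatten1 (T : Type) (s : seq T) : flatten [seq [:: x] | x <- s] = s.
Proof. by elim: s => //= x s ->. Qed.

Lemma mapflat (A B : Type) (h : A -> B) k s :
  map h (flatten [seq nseq k i | i <- s]) = flatten [seq nseq k i | i <- map h s].
Proof. by elim: s => //= x s IH; rewrite map_cat map_nseq IH. Qed.

Lemma tpowC (C : bgraph -> Prop) k l : graph_category C ->
  C (@BG unit nof (nseq k tt) (nseq l tt)) -> forall n, C (tpow k l n).
Proof.
case=> isoC [M11 M02 Z0] tensC compC invC X; elim=> [|n IH].
  apply: isoC Z0; have g : 'I_0 -> void by case=> m; rewrite ltn0.
  exists (fun v : void => match v with end); split.
  - by exists g; case.
  - by case.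
  - by rewrite /tpow /= enum_ord0.
  - by rewrite /tpow /= enum_ord0.
have := tensC _ _ X IH; apply: isoC.
pose f (u : unit + 'I_n) : 'I_n.+1 := if u is inr i then lift ord0 i else ord0.
pose g (j : 'I_n.+1) : unit + 'I_n := if unlift ord0 j is Some i then inr i else inl tt.
exists f; split.
- exists g; first by case=> [[]|i]; rewrite /f /g ?unlift_none ?liftK.
  by move=> j; rewrite /f /g; case: unliftP => [i ->|->].
- by case=> [[]|i] [[]|j].
- rewrite /= enum_ordSl /= map_cat -map_comp map_nseq; congr (_ ++ _).
  by rewrite -map_comp mapflat.
- rewrite /= enum_ordSl /= map_cat -map_comp map_nseq; congr (_ ++ _).
  by rewrite -map_comp mapflat.
Qed.

Lemma idnC (C : bgraph -> Prop) n : graph_category C -> C (idn n).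
Proof.
move=> gc; have M11 : C (bM 1 1) by case: gc => _ [].
have := tpowC gc M11 n.
by rewrite /tpow /idn !flatten1.
Qed.

Lemma edge_left (K H : bgraph) (Z : finType) (f : bV K + bV H -> Z) z1 z2 :
  (forall y y' : bV H, badj y y' = false) ->
  [exists u, exists v, [&& f u == z1, f v == z2 & @bedge (bunion_io K H) u v]] =
  [exists x, exists y, [&& f (inl x) == z1, f (inl y) == z2 & bedge x y]].
Proof.
move=> H0; apply/existsP/existsP => [[u /existsP[v /and3P[fu fv euv]]]|[x /existsP[y /and3P[fx fy exy]]]].
  case: u v fu fv euv => [x|y] [x'|y'] fu fv; rewrite /bedge /= ?H0 // => exy.
  by exists x; apply/existsP; exists x'; rewrite fu fv.
by exists (inl x); apply/existsP; exists (inl y); rewrite fx fy.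
Qed.

Lemma edge_right (K H : bgraph) (Z : finType) (f : bV K + bV H -> Z) z1 z2 :
  (forall y y' : bV K, badj y y' = false) ->
  [exists u, exists v, [&& f u == z1, f v == z2 & @bedge (bunion_io K H) u v]] =
  [exists x, exists y, [&& f (inr x) == z1, f (inr y) == z2 & bedge x y]].
Proof.
move=> H0; apply/existsP/existsP => [[u /existsP[v /and3P[fu fv euv]]]|[x /existsP[y /and3P[fx fy exy]]]].
  case: u v fu fv euv => [x|y] [x'|y'] fu fv; rewrite /bedge /= ?H0 // => exy.
  by exists y; apply/existsP; exists y'; rewrite fu fv.
by exists (inr x); apply/existsP; exists (inr y); rewrite fx fy.
Qed.

Lemma map_tnth (T : Type) (s : seq T) : map (tnth (in_tuple s)) (enum 'I_(size s)) = s.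
Proof. exact: map_tnth_enum. Qed.

Lemma map_tnth' (T : Type) (s : seq T) (h : 'I_(size s) -> T) :
  h =1 tnth (in_tuple s) -> map h (enum 'I_(size s)) = s.
Proof. by move=> e; rewrite (eq_map e) map_tnth. Qed.

Lemma map_idf (T : Type) (h : T -> T) (s : seq T) : h =1 id -> map h s = s.
Proof. by move=> e; rewrite (eq_map e) map_id. Qed.

Lemma subst_out (C : bgraph -> Prop) (T : finType) (e : rel T) (a p u q : seq T)
    (W : finType) (wi wo : seq W) (g : W -> T) :
  graph_category C ->
  C (BG e a (p ++ u ++ q)) -> C (@BG W nof wi wo) -> (forall w, w \in wi) -> map g wi = u ->
  C (BG e a (p ++ map g wo ++ q)).
Proof.
move=> gc CG CW win gu.
case: (gc) => isoC _ tensC compC _.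
pose X := btensor (btensor (idn (size p)) (@BG W nof wi wo)) (idn (size q)).
have CX : C X.
  apply: (tensC); last exact: idnC.
  by apply: (tensC) => //; exact: idnC.
have szX : size (bout (BG e a (p ++ u ++ q))) = size (binp X).
  by rewrite /= !size_cat !size_map !size_cat !size_map -!enumT !size_enum_ord -gu size_map addnA.
have := compC _ _ CX CG szX; apply: isoC.
pose f (v : T + bV X) : T := match v with
  | inl x => x
  | inr (inl (inl i)) => tnth (in_tuple p) i
  | inr (inl (inr w)) => g w
  | inr (inr j) => tnth (in_tuple q) j end.
apply: (@comp_iso2 X (BG e a (p ++ u ++ q)) (BG e a (p ++ map g wo ++ q)) f inl) => //.
- move=> [[i|w]|j]; rewrite /= !mem_cat.
  + by rewrite (map_f inl) ?(map_f inl) ?mem_cat ?(map_f inl) ?mem_enum.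
  + by rewrite (map_f inl) ?(map_f inl) ?mem_cat ?(map_f inr) ?win ?orbT.
  + by rewrite (map_f inr) ?mem_enum ?orbT.
- rewrite /= !map_cat -!map_comp -!enumT map_idf // (@map_idf _ _ u) // (@map_idf _ _ q) //.
  by rewrite (@map_tnth' _ p) // (@map_tnth' _ q) // -catA -gu.
- move=> z1 z2; rewrite edge_left; last by move=> [[i|w]|j] [[i'|w']|j'].
  apply/idP/existsP => [exy|[x /existsP[y /and3P[/eqP<- /eqP<- //]]]].
  by exists z1; apply/existsP; exists z2; rewrite !eqxx.
- by rewrite map_idf.
- rewrite /= !map_cat -!map_comp -!enumT.
  by rewrite (@map_tnth' _ p) // (@map_tnth' _ q) // -catA.
Qed.

Definition dd (T : Type) (s : seq T) := flatten [seq [:: x; x] | x <- s].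

Lemma dd_cons (T : Type) (x : T) s : dd (x :: s) = x :: x :: dd s.
Proof. by []. Qed.

Lemma dd_cat (T : Type) (s t : seq T) : dd (s ++ t) = dd s ++ dd t.
Proof. by rewrite /dd map_cat flatten_cat. Qed.

Lemma map_dd (A B : Type) (f : A -> B) s : map f (dd s) = dd (map f s).
Proof. by elim: s => //= x s IH; rewrite IH. Qed.

Lemma invBG (C : bgraph -> Prop) (T : finType) (e : rel T) a b :
  graph_category C -> C (BG e a b) -> C (BG e b a).
Proof. by case=> _ _ _ _ invC /invC. Qed.

Section Moves.
Variables (C : bgraph -> Prop).
Hypotheses (gc : graph_category C) (hP : C bPgt).

Lemma mv_l (T : finType) (e : rel T) a p q s t :
  C (BG e a (p ++ [:: s; t; t] ++ q)) -> C (BG e a (p ++ [:: t; t; s] ++ q)).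
Proof.
move=> H.
have := @subst_out C T e a p [:: s; t; t] q bool [:: false; true; true] [:: true; true; false]
  (fun b : bool => if b then t else s) gc H hP.
by apply => //; case.
Qed.

Lemma mv_r (T : finType) (e : rel T) a p q s t :
  C (BG e a (p ++ [:: t; t; s] ++ q)) -> C (BG e a (p ++ [:: s; t; t] ++ q)).
Proof.
move=> H.
have hP' : C (@BG bool nof [:: true; true; false] [:: false; true; true]).
  by case: gc => _ _ _ _ /(_ _ hP).
have := @subst_out C T e a p [:: t; t; s] q bool [:: true; true; false] [:: false; true; true]
  (fun b : bool => if b then t else s) gc H hP'.
by apply => //; case.
Qed.

Lemma pair_r (T : finType) (e : rel T) a t l : forall p q,
  C (BG e a (p ++ [:: t; t] ++ l ++ q)) -> C (BG e a (p ++ l ++ [:: t; t] ++ q)).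
Proof.
elim: l => // s l IH p q H.
have := @mv_r T e a p (l ++ q) s t H.
by rewrite -cat_rcons => /IH; rewrite cat_rcons.
Qed.

Lemma pair_l (T : finType) (e : rel T) a t l : forall p q,
  C (BG e a (p ++ l ++ [:: t; t] ++ q)) -> C (BG e a (p ++ [:: t; t] ++ l ++ q)).
Proof.
elim: l => // s l IH p q H.
apply: (@mv_l T e a p (l ++ q) s t).
by rewrite -cat_rcons; apply: IH; rewrite cat_rcons.
Qed.

Lemma dd_r (T : finType) (e : rel T) a l g : forall p q,
  C (BG e a (p ++ dd g ++ l ++ q)) -> C (BG e a (p ++ l ++ dd g ++ q)).
Proof.
elim: g => // x g IH p q H.
have H1 : C (BG e a ((p ++ [:: x; x]) ++ dd g ++ l ++ q)) by rewrite -catA.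
have := IH _ _ H1; rewrite -catA => /pair_r.
by rewrite dd_cons.
Qed.

Lemma dd_l (T : finType) (e : rel T) a l g : forall p q,
  C (BG e a (p ++ l ++ dd g ++ q)) -> C (BG e a (p ++ dd g ++ l ++ q)).
Proof.
elim: g => // x g IH p q H.
rewrite dd_cons -cat1s -[[:: x] ++ _]/([:: x; x] ++ dd g) -catA catA.
apply: IH; rewrite -catA; apply: pair_l; exact: H.
Qed.

Lemma dd_perm (T : finType) (e : rel T) a h : forall g p q, perm_eq g h ->
  C (BG e a (p ++ dd g ++ q)) -> C (BG e a (p ++ dd h ++ q)).
Proof.
elim: h => [|x h IH] g p q pgh.
  by move: (perm_size pgh); case: g pgh.
have xg : x \in g by rewrite (perm_mem pgh) mem_head.
move: pgh; case/splitPr: xg => g1 g2 pgh.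
rewrite dd_cat dd_cons => H.
have H1 : C (BG e a (p ++ [:: x; x] ++ dd g1 ++ dd g2 ++ q)).
  by apply: pair_l; rewrite catA -[dd g1 ++ _]/(dd g1 ++ [:: x; x] ++ dd g2) -!catA in H *.
have H2 : C (BG e a ((p ++ [:: x; x]) ++ dd (g1 ++ g2) ++ q)) by rewrite dd_cat -!catA.
have := IH _ _ _ _ H2; rewrite -catA dd_cons; apply.
by rewrite -(perm_cons x) (perm_trans _ pgh) // perm_sym (perm_catCA g1 [:: x] g2).
Qed.

End Moves.

Lemma glue_sym (K H : bgraph) u v : @glue_rel K H u v = glue_rel v u.
Proof. by rewrite /glue_rel orbC. Qed.

Definition M13 := @BG unit nof [:: tt] [:: tt; tt; tt].

Lemma M13C (C : bgraph -> Prop) : graph_category C -> C bPgt -> C M13.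
Proof.
move=> gc hP; case: (gc) => isoC [M11 M02 Z0] tensC compC invC.
have := compC _ _ hP (tensC _ _ M02 M11) erefl; apply: isoC.
apply: (@comp_iso2 bPgt (btensor (bM 0 2) (bM 1 1)) M13 (fun _ => tt) (fun _ => inl (inl tt))) => //.
- by case.
- case=> [[]|[]]; first exact: connect0.
  apply: (@connect_trans _ _ (inr true)); apply: connect1.
    by apply: glueP; rewrite !inE.
  by rewrite glue_sym; apply: glueP; rewrite !inE.
- by case.
- move=> z1 z2; rewrite edge_left; last by case.
  by apply/esym/existsP => -[x /existsP[y]]; case: x y => [[]|[]] [[]|[]].
Qed.

Definition M04 := @BG unit nof [::] [:: tt; tt; tt; tt].

Lemma M04C (C : bgraph -> Prop) : graph_category C -> C bPgt -> C M04.
Proof.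
move=> gc hP; have M02 : C (bM 0 2) by case: gc => _ [].
have := @subst_out C unit nof [::] [::] [:: tt] [:: tt] unit [:: tt] [:: tt; tt; tt] id gc M02 (M13C gc hP).
by apply => //; case.
Qed.

Lemma map_cst (A B : Type) (v : B) (s : seq A) : map (fun _ => v) s = nseq (size s) v.
Proof. by elim: s => //= x s ->. Qed.

Lemma bend (C : bgraph -> Prop) (T : finType) (e : rel T) A B v :
  graph_category C -> C bPgt ->
  C (BG e (A ++ [:: v; v]) B) -> C (BG e A (B ++ [:: v; v])).
Proof.
move=> gc hP CG; case: (gc) => isoC _ tensC compC _.
pose H := btensor (BG e (A ++ [:: v; v]) B) (idn 2).
pose K := btensor (idn (size A)) M04.
have CH : C H by apply: (tensC) => //; exact: idnC.
have CK : C K by apply: (tensC); [exact: idnC | exact: M04C].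
have sz : size (bout K) = size (binp H).
  by rewrite /= !size_cat !size_map -!enumT !size_enum_ord size_cat -addnA.
have := compC _ _ CH CK sz; apply: isoC.
pose f (u : bV K + bV H) : T := match u with
  | inl (inl i) => tnth (in_tuple A) i
  | inl (inr _) => v
  | inr (inl x) => x
  | inr (inr _) => v end.
have eH : binp H = map inl A ++ ([:: inl v; inl v] ++ map inr (enum 'I_2)).
  by rewrite /= map_cat -catA.
apply: (@comp_iso2 H K (BG e A (B ++ [:: v; v])) f (fun x => inr (inl x))) => //.
- case=> [i|[]]; apply: connect1; apply: glueP; rewrite eH.
    apply: mem_zip_cat; first by rewrite !size_map -enumT size_enum_ord.
    by rewrite (mem_zip_map inl inl (zip_tnth i)).
  apply: mem_zip_cat; first by rewrite !size_map -enumT size_enum_ord.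
  by rewrite /= in_cons eqxx orbT.
- case=> [x|j]; first by move=> _; exact: connect0.
  by rewrite /= !mem_cat (map_f inr) ?mem_enum ?orbT.
- rewrite /= !map_cat -!map_comp -!enumT (@map_tnth' _ A) //.
  by rewrite !map_idf // (map_cst v) size_enum_ord -catA.
- move=> z1 z2; rewrite edge_right; last by move=> [i|[]] [j|[]].
  apply/idP/existsP => [exy|[[x|i] /existsP[[y|j] /and3P[/eqP<- /eqP<- //]]]].
  by exists (inl z1); apply/existsP; exists (inl z2); rewrite !eqxx.
- by rewrite /= map_cat -!map_comp -!enumT (@map_tnth' _ A) // cats0.
- rewrite /= map_cat -!map_comp -!enumT map_idf //.
  by rewrite (map_cst v) size_enum_ord.
Qed.

Section Add.
Variables (C : bgraph -> Prop).
Hypotheses (gc : graph_category C) (hP : C bPgt).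

Lemma dup_out (T : finType) (e : rel T) a p q x :
  C (BG e a (p ++ [:: x] ++ q)) -> C (BG e a (p ++ [:: x; x; x] ++ q)).
Proof.
move=> H; have := @subst_out C T e a p [:: x] q unit [:: tt] [:: tt; tt; tt] (fun _ => x) gc H (M13C gc hP).
by apply => //; case.
Qed.

Lemma addOut (T : finType) (e : rel T) A B v :
  C (BG e A B) -> v \in A ++ B -> C (BG e A (B ++ [:: v; v])).
Proof.
move=> H; rewrite mem_cat => /orP[vA|vB].
  move: H; case/splitPr: vA => A1 A2 H.
  have H1 : C (BG e B (A1 ++ [:: v; v; v] ++ A2)).
    by apply: dup_out; rewrite cat1s; exact: invBG.
  have H2 : C (BG e B ((A1 ++ [:: v]) ++ [:: v; v] ++ A2 ++ [::])) by rewrite cats0 -catA.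
  have H3 := @pair_r C gc hP T e B v A2 (A1 ++ [:: v]) [::] H2.
  apply: (bend gc hP); have := invBG gc H3.
  by rewrite cats0 -!catA.
move: H; case/splitPr: vB => B1 B2 H.
have H1 : C (BG e A (B1 ++ [:: v; v; v] ++ B2)) by apply: dup_out; rewrite cat1s.
have H2 : C (BG e A ((B1 ++ [:: v]) ++ [:: v; v] ++ B2 ++ [::])) by rewrite cats0 -catA.
have := @pair_r C gc hP T e A v B2 (B1 ++ [:: v]) [::] H2.
by rewrite cats0 -!catA.
Qed.

Lemma addIn (T : finType) (e : rel T) A B v :
  C (BG e A B) -> v \in A ++ B -> C (BG e (A ++ [:: v; v]) B).
Proof.
move=> H vin; apply: (invBG gc); apply: addOut; first exact: invBG.
by rewrite mem_cat orbC -mem_cat.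
Qed.

Lemma addOuts (T : finType) (e : rel T) A B d :
  C (BG e A B) -> {subset d <= A ++ B} -> C (BG e A (B ++ dd d)).
Proof.
move=> H; elim/last_ind: d => [|d v IH] sub; first by rewrite cats0.
rewrite -cats1 dd_cat catA; apply: addOut.
  by apply: IH => x xd; apply: sub; rewrite mem_rcons in_cons xd orbT.
by rewrite catA mem_cat; apply/orP; left; apply: sub; rewrite mem_rcons mem_head.
Qed.

Lemma addIns (T : finType) (e : rel T) A B d :
  C (BG e A B) -> {subset d <= A ++ B} -> C (BG e (A ++ dd d) B).
Proof.
move=> H sub; apply: (invBG gc); apply: addOuts; first exact: invBG.
by move=> x /sub; rewrite !mem_cat orbC.
Qed.

End Add.

Definition ext (G : bgraph) (d1 d2 : seq (bV G)) :=
  @BG (bV G) (@badj G) (binp G ++ dd d1) (bout G ++ dd d2).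

Definition Eprop (C : bgraph -> Prop) (G : bgraph) := forall d1 d2 : seq (bV G), C (@ext G d1 d2).

Lemma FL_E (C : bgraph -> Prop) (G : bgraph) : graph_category C -> C bPgt -> C G ->
  (forall v, (v \in binp G) || (v \in bout G)) -> Eprop C G.
Proof.
move=> gc hP; case: G => T e A B /= CG lab d1 d2; rewrite /ext /=.
apply: (addIns gc hP); first apply: (addOuts gc hP) => //.
  by move=> x _; rewrite mem_cat lab.
by move=> x _; rewrite catA mem_cat; apply/orP; left; rewrite mem_cat lab.
Qed.

Lemma mapfl (I A B : Type) (h : A -> B) (F : I -> seq A) s :
  map h (flatten [seq F i | i <- s]) = flatten [seq map h (F i) | i <- s].
Proof. by elim: s => //= i s IH; rewrite map_cat IH. Qed.

Lemma size_flat (I A B : Type) (F : I -> seq A) (G : I -> seq B) s :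
  (forall i, size (F i) = size (G i)) ->
  size (flatten [seq F i | i <- s]) = size (flatten [seq G i | i <- s]).
Proof. by move=> e; elim: s => //= i s IH; rewrite !size_cat IH e. Qed.

Lemma zip_flat (I A B : Type) (F : I -> seq A) (G : I -> seq B) s :
  (forall i, size (F i) = size (G i)) ->
  zip (flatten [seq F i | i <- s]) (flatten [seq G i | i <- s]) = flatten [seq zip (F i) (G i) | i <- s].
Proof. by move=> e; elim: s => //= i s IH; rewrite zip_cat ?e // IH. Qed.

Lemma flat_nseq0 (I A : Type) (s : seq I) : flatten [seq nseq 0 (i : A) | i <- [::] : seq A] = [::].
Proof. by []. Qed.

Lemma flat_nil (I A : Type) (s : seq I) : flatten [seq ([::] : seq A) | i <- s] = [::].
Proof. by elim: s. Qed.

Lemma dd_flat (I A : Type) (a b : I -> A) s :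
  dd (flatten [seq [:: a i; b i] | i <- s]) = flatten [seq [:: a i; a i; b i; b i] | i <- s].
Proof. by elim: s => //= i s <-. Qed.

Lemma quotE (C : bgraph -> Prop) (G : bgraph) (P : {set {set bV G}}) :
  graph_category C -> C bPgt -> Eprop C G -> partition P [set: bV G] -> C (bquot P).
Proof.
move=> gc hP; case: G P => T e A B P /= EG partP.
case: (gc) => isoC _ tensC compC _.
case/and3P: (partP) => /eqP covP tiP nzP.
have inC x : x \in cover P by rewrite covP inE.
have memP x : pblock P x \in P by rewrite pblock_mem.
pose qb x : qV P := Sub (pblock P x) (memP x).
pose r x := odflt x [pick y in pblock P x].
have rin x : r x \in pblock P x.
  by rewrite /r; case: pickP => [y /= ->|] //=; rewrite mem_pblock.
have qbE x y : (qb x == qb y) = (y \in pblock P x).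
  by rewrite -val_eqE /= eq_pblock.
have qbr x : qb (r x) = qb x by apply/eqP; rewrite eq_sym qbE rin.
have rq x y : qb x = qb y -> r x = r y.
  move/(congr1 val) => /= e'; rewrite /r -e'; case: pickP => [z _ //|/(_ x)]; by rewrite /= mem_pblock inC.
have qsurj : forall Bq : qV P, exists x, qb x = Bq.
  move=> Bq; have : val Bq != set0 by apply: contraNneq nzP => <-; exact: valP.
  case/set0Pn => x xB; exists x; apply: val_inj => /=.
  exact: (def_pblock tiP (valP Bq) xB).
have [c' c'K] := fin_all_exists qsurj.
pose n := #|T|.
pose xv (i : 'I_n) : T := enum_val i.
pose d := flatten [seq [:: xv i; r (xv i)] | i <- enum 'I_n].
have CK := EG [::] d; rewrite /ext /= cats0 dd_flat in CK.
pose X := btensor (idn (size B)) (tpow 4 0 n).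
have CX : C X.
  apply: (tensC); first exact: idnC. apply: tpowC => //; exact: (invBG gc (M04C gc hP)).

have eX : binp X = map inl (enum 'I_(size B)) ++ flatten [seq nseq 4 (inr i) | i <- enum 'I_n].
  by rewrite /= mapfl; congr (_ ++ flatten _); apply: eq_map => i; rewrite map_nseq.
have sz : size (B ++ flatten [seq [:: xv i; xv i; r (xv i); r (xv i)] | i <- enum 'I_n]) = size (binp X).
  by rewrite eX !size_cat size_map size_enum_ord; congr (_ + _); apply: size_flat => i; rewrite size_nseq.
have := compC _ _ CX CK sz; apply: isoC.
pose f (u : T + bV X) : qV P := match u with
  | inl x => qb x
  | inr (inl j) => qb (tnth (in_tuple B) j)
  | inr (inr i) => qb (xv i) end.
apply: (@comp_iso2 X (BG e A (B ++ flatten [seq [:: xv i; xv i; r (xv i); r (xv i)] | i <- enum (ordinal n)])) (bquot P) f (fun z => inl (r (c' z)))).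

- exact: sz.
- by move=> z /=; rewrite qbr c'K.
- move=> x /=; rewrite (rq _ x); last by rewrite c'K.
  pose ii : bV X := inr (enum_rank x).
  have zmem y : y \in [:: x; x; r x; r x] ->
      (y, ii) \in zip (B ++ flatten [seq [:: xv i; xv i; r (xv i); r (xv i)] | i <- enum 'I_n]) (binp X).
    move=> yin; rewrite eX; apply: mem_zip_cat; first by rewrite size_map size_enum_ord.
    apply/orP; right; rewrite zip_flat; last by move=> i; rewrite size_nseq.
    apply/flatten_mapP; exists (enum_rank x); first by rewrite mem_enum.
    rewrite /xv enum_rankK; move: yin; rewrite !inE => /or4P[]/eqP->; by rewrite eqxx ?orbT.
  apply: (@connect_trans _ _ (inr ii)); apply: connect1.
    by apply: glueP; apply: zmem; rewrite mem_head.
  by rewrite glue_sym; apply: glueP; apply: zmem; rewrite !inE eqxx ?orbT.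
- move=> [j|i]; rewrite eX mem_cat.
    by rewrite (map_f inl) ?mem_enum.
  move/negP; case; apply/orP; right; apply/flatten_mapP; exists i; rewrite ?mem_enum //.
  by rewrite mem_nseq eqxx.
- rewrite eX /= !map_cat -!map_comp.
  congr (_ ++ _).
    by rewrite -enumT (eq_map (g := qb \o tnth (in_tuple B))) // [RHS]map_comp map_tnth.
  rewrite !mapfl; congr flatten; apply: eq_map => i /=; by rewrite qbr.
- have inb x (z : qV P) : (x \in val z) = (qb x == z).
    apply/idP/eqP => [xz|<-]; last by rewrite /= mem_pblock inC.
    by apply: val_inj; rewrite /= (def_pblock tiP (valP z) xz).
  have Eadj (z z' : qV P) : [exists x in val z, exists y in val z', @bedge (BG e A B) x y]
      = [exists x, exists y, [&& qb x == z, qb y == z' & @bedge (BG e A B) x y]].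
    apply/existsP/existsP => [[x /andP[xin /existsP[y /andP[yin exy]]]] | [x /existsP[y /and3P[fx fy exy]]]].
      by exists x; apply/existsP; exists y; rewrite -!inb xin yin.
    by exists x; rewrite inb fx; apply/existsP; exists y; rewrite inb fy.
  move=> z1 z2; rewrite edge_left; last by move=> [j|i] [j'|i'].
  rewrite /bedge /= !Eadj; apply/orb_idr => /existsP[x /existsP[y /and3P[fx fy exy]]].
  by apply/existsP; exists y; apply/existsP; exists x; rewrite fx fy bedgeC.
- have qm x : qmap P x = Some (qb x).
    rewrite /qmap; case: insubP => [B0 _ eB|]; last by rewrite memP.
    by congr Some; apply: val_inj; rewrite eB.
  have pm s : pmap (qmap P) s = map qb s by elim: s => //= x s ->; rewrite qm.
  move: pm => pm.
  rewrite /= pm; by [].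
- have qm x : qmap P x = Some (qb x).
    rewrite /qmap; case: insubP => [B0 _ eB|]; last by rewrite memP.
    by congr Some; apply: val_inj; rewrite eB.
  have pm s : pmap (qmap P) s = map qb s by elim: s => //= x s ->; rewrite qm.
  rewrite /= pm flat_nil cats0 -map_comp.
  by rewrite (eq_map (g := qb \o tnth (in_tuple B))) // map_comp map_tnth.
Qed.

Lemma connect_map (T1 T2 : finType) (e1 : rel T1) (e2 : rel T2) (h : T1 -> T2) :
  (forall u v, e1 u v -> connect e2 (h u) (h v)) ->
  forall u v, connect e1 u v -> connect e2 (h u) (h v).
Proof.
move=> H u v /connectP[p pth ->]; elim: p u pth => [|w p IH] u /=; first by move=> _; exact: connect0.
by case/andP=> euw pth; apply: connect_trans (H _ _ euw) (IH _ pth).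
Qed.

Lemma zip_map_eq2 (A B R : eqType) (F : A -> R) (G : B -> R) s t :
  size s = size t -> (forall x y, (x, y) \in zip s t -> F x = G y) -> map F s = map G t.
Proof.
elim: s t => [|x s IH] [|y t] //= [e] H.
by rewrite (H x y) ?mem_head // (IH t e) // => a b ab; apply: H; rewrite in_cons ab orbT.
Qed.

Lemma quot_pack (K : bgraph) (P : {set {set bV K}}) : partition P [set: bV K] ->
  exists qb : bV K -> qV P,
    [/\ (forall x y, (qb x == qb y) = (y \in pblock P x)),
        (forall z, exists x, qb x = z),
        (forall x, qmap P x = Some (qb x)) &
        (forall z1 z2, @bedge (bquot P) z1 z2 = [exists x, exists y, [&& qb x == z1, qb y == z2 & bedge x y]])].
Proof.
case/and3P=> /eqP covP tiP nzP.
have inC x : x \in cover P by rewrite covP inE.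
have memP x : pblock P x \in P by rewrite pblock_mem.
pose qb x : qV P := Sub (pblock P x) (memP x).
have inb x (z : qV P) : (x \in val z) = (qb x == z).
  apply/idP/eqP => [xz|<-]; last by rewrite /= mem_pblock inC.
  by apply: val_inj; rewrite /= (def_pblock tiP (valP z) xz).
have Eadj (z z' : qV P) : [exists x in val z, exists y in val z', bedge x y]
    = [exists x, exists y, [&& qb x == z, qb y == z' & bedge x y]].
  apply/existsP/existsP => [[x /andP[xin /existsP[y /andP[yin exy]]]] | [x /existsP[y /and3P[fx fy exy]]]].
    by exists x; apply/existsP; exists y; rewrite -!inb xin yin.
  by exists x; rewrite inb fx; apply/existsP; exists y; rewrite inb fy.
exists qb; split.
- by move=> x y; rewrite -val_eqE /= eq_pblock.
- move=> z; have : val z != set0 by apply: contraNneq nzP => <-; exact: valP.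
  by case/set0Pn => x xB; exists x; apply/eqP; rewrite -inb.
- move=> x; rewrite /qmap; case: insubP => [B0 _ eB|]; last by rewrite memP.
  by congr Some; apply: val_inj; rewrite eB.
- move=> z1 z2; rewrite /bedge /= !Eadj; apply/orb_idr => /existsP[x /existsP[y /and3P[fx fy exy]]].
  by apply/existsP; exists y; apply/existsP; exists x; rewrite fx fy bedgeC.
Qed.

Definition getl (A B : Type) (u : A + B) := if u is inl x then Some x else None.
Definition getr (A B : Type) (u : A + B) := if u is inr x then Some x else None.

Lemma perm_lr (A B : eqType) (s : seq (A + B)) :
  perm_eq (map inl (pmap (@getl A B) s) ++ map inr (pmap (@getr A B) s)) s.
Proof.
elim: s => //= [[x|y] s IH] /=; first by rewrite perm_cons.
rewrite -(perm_cons (inr y)) in IH; apply: perm_trans IH.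
by rewrite -cat1s -[inr y :: _]cat1s perm_catCA.
Qed.

Lemma E_iso (C : bgraph -> Prop) (G H : bgraph) :
  graph_category C -> bg_iso G H -> Eprop C G -> Eprop C H.
Proof.
case=> isoC _ _ _ _ [f [[g fg gf] Hed Hi Ho]] EG d1 d2.
have := EG (map g d1) (map g d2); apply: isoC; exists f; split.
- by exists g.
- exact: Hed.
- by rewrite /= map_cat Hi map_dd -map_comp (eq_map gf) map_id.
- by rewrite /= map_cat Ho map_dd -map_comp (eq_map gf) map_id.
Qed.

Lemma E_inv (C : bgraph -> Prop) (G : bgraph) :
  graph_category C -> Eprop C G -> Eprop C (binv G).
Proof. by case=> _ _ _ _ invC EG d1 d2; exact: (invC _ (EG d2 d1)). Qed.

Lemma dd_perm0 (C : bgraph -> Prop) (T : finType) (e : rel T) a p g h :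
  graph_category C -> C bPgt -> perm_eq g h ->
  C (BG e a (p ++ dd g)) -> C (BG e a (p ++ dd h)).
Proof.
move=> gc hP pgh H; have := @dd_perm C gc hP T e a h g p [::] pgh.
by rewrite !cats0; apply.
Qed.

Lemma E_tensor (C : bgraph -> Prop) (G H : bgraph) :
  graph_category C -> C bPgt -> Eprop C G -> Eprop C H -> Eprop C (btensor G H).
Proof.
move=> gc hP EG EH d1 d2; case: (gc) => _ _ tensC _ _.
pose gl := pmap (@getl (bV G) (bV H)); pose gr := pmap (@getr (bV G) (bV H)).
have := tensC _ _ (EG (gl d1) (gl d2)) (EH (gr d1) (gr d2)).
rewrite /btensor /ext /= !map_cat !map_dd -!catA => H0.
have H1 := @dd_r C gc hP _ _ _ (map inr (bout H)) (map inl (gl d2)) (map inl (bout G)) (dd (map inr (gr d2))) H0.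
rewrite -dd_cat (catA (map inl (bout G))) in H1.
have H2 := dd_perm0 gc hP (perm_lr d2) H1.
rewrite -catA in H2; have H3 := invBG gc H2.
have H4 := @dd_r C gc hP _ _ _ (map inr (binp H)) (map inl (gl d1)) (map inl (binp G)) (dd (map inr (gr d1))) H3.
rewrite -dd_cat (catA (map inl (binp G))) in H4.
have H5 := dd_perm0 gc hP (perm_lr d1) H4.
have H6 := invBG gc H5.
by rewrite -catA in H6.
Qed.

Lemma zip_lr (A B : eqType) (s : seq A) (t : seq B) u v :
  (u, v) \in zip (map (@inl A B) s) (map (@inr A B) t) ->
  exists x y, [/\ u = inl x, v = inr y & (x, y) \in zip s t].
Proof.
rewrite zip_map2 => /mapP[[x y] xy [-> ->]]; by exists x, y.
Qed.

Lemma map_dd_tnth (A R : Type) (F : A -> R) (s : seq A) :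
  map (fun j => F (tnth (in_tuple s) j)) (enum 'I_(size s)) = map F s.
Proof. by rewrite (map_comp F (tnth (in_tuple s))) map_tnth. Qed.

Lemma dd_r0 (C : bgraph -> Prop) (T : finType) (e : rel T) a p l g :
  graph_category C -> C bPgt ->
  C (BG e a (p ++ dd g ++ l)) -> C (BG e a (p ++ l ++ dd g)).
Proof.
move=> gc hP H; have := @dd_r C gc hP T e a l g p [::].
by rewrite !cats0; apply.
Qed.

Lemma E_comp (C : bgraph -> Prop) (G H : bgraph) :
  graph_category C -> C bPgt -> Eprop C G -> Eprop C H ->
  size (bout G) = size (binp H) -> Eprop C (bcomp H G).
Proof.
move=> gc hP EG EH szGH d1 d2; case: (gc) => isoC _ tensC compC _.
pose P0 := equivalence_partition (connect (@glue_rel G H)) [set: bV G + bV H].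
have gsym : symmetric (@glue_rel G H) by move=> u v; rewrite glue_sym.
have csym := sym_connect_sym gsym.
have eqR : {in [set: bV G + bV H] & &, equivalence_rel (connect (@glue_rel G H))}.
  move=> x y z _ _ _; split; first exact: connect0.
  by move=> cxy; apply: same_connect.
have partP0 : partition P0 [set: bV G + bV H] := equivalence_partitionP eqR.
have [qb [qbE qsurj qm qedge]] := @quot_pack (bunion_io G H) P0 partP0.
have qbc u v : (qb u == qb v) = connect (@glue_rel G H) u v.
  by rewrite qbE pblock_equivalence_partition ?inE.
have [rep repK] := fin_all_exists qsurj.
pose s1 := map rep d1; pose s2 := map rep d2.
pose g1 := pmap (@getl (bV G) (bV H)) s1; pose h1 := pmap (@getr (bV G) (bV H)) s1.
pose g2 := pmap (@getl (bV G) (bV H)) s2; pose h2 := pmap (@getr (bV G) (bV H)) s2.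
pose m1 := size (dd h1); pose m2 := size (dd g2).
pose Gx := btensor (@ext G g1 g2) (idn m1).
have CGx : C Gx by apply: (tensC) => //; exact: idnC.
pose Gy := @BG (bV G + 'I_m1)%type (@badj Gx) (map inl (binp G ++ dd g1) ++ map inr (enum 'I_m1))
   (map inl (bout G) ++ map inr (enum 'I_m1) ++ dd (map inl g2)).
have CGy : C Gy.
  have e1 : map inl (bout G ++ dd g2) ++ map inr (enum 'I_m1)
           = map inl (bout G) ++ dd (map (@inl _ 'I_m1) g2) ++ map inr (enum 'I_m1).
    by rewrite map_cat map_dd -catA.
  move: CGx; rewrite /Gx /btensor /ext /= e1 => CGx.
  exact: (dd_r0 gc hP CGx).
pose Hx := btensor (@ext H h1 h2) (idn m2).
have CHx : C Hx by apply: (tensC) => //; exact: idnC.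
have sz : size (bout Gy) = size (binp Hx).
  by rewrite /= !size_cat !size_map !size_cat -!enumT !size_enum_ord -map_dd size_map szGH addnA.
have CR := compC _ _ CHx CGy sz.
pose K0 := bcomp H G.
pose Z := @BG (bV K0) (@badj K0) (binp K0 ++ dd (map qb (map inl g1) ++ map qb (map inr h1)))
   (bout K0 ++ dd (map qb (map inr h2) ++ map qb (map inl g2))).
have CZ : C Z.
  apply: isoC CR.
  pose emb (u : bV G + bV H) : bV Gy + bV Hx := match u with inl x => inl (inl x) | inr y => inr (inl y) end.
  pose f (w : bV Gy + bV Hx) : bV K0 := match w with
    | inl (inl x) => qb (inl x)
    | inl (inr j) => qb (inr (tnth (in_tuple (dd h1)) j))
    | inr (inl y) => qb (inr y)
    | inr (inr j) => qb (inl (tnth (in_tuple (dd g2)) j)) end.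
  have femb u : f (emb u) = qb u by case: u.
  have eHx : binp Hx = map inl (binp H) ++ (map inl (dd h1) ++ map inr (enum 'I_m2)).
    by rewrite /= map_cat -catA.
  have lift : forall u v, connect (@glue_rel G H) u v -> connect (@glue_rel Gy Hx) (emb u) (emb v).
    apply: connect_map => u v /orP[] /zip_lr [x [y [-> -> xy]]]; apply: connect1.
      apply: glueP; rewrite eHx; apply: mem_zip_cat; first by rewrite !size_map.
      by rewrite (mem_zip_map inl inl xy).
    rewrite /= glue_sym; apply: glueP; rewrite eHx; apply: mem_zip_cat; first by rewrite !size_map.
    by rewrite (mem_zip_map inl inl xy).
  have toc u : connect (@glue_rel G H) u (rep (qb u)) by rewrite -qbc repK.
  apply: (@comp_iso2 Hx Gy Z f (fun z => emb (rep z))).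
  - exact: sz.
  - by move=> z; rewrite femb repK.
  - move=> [x|j].
      by have := lift _ _ (toc (inl x)).
    apply: (@connect_trans _ _ (inr (inl (tnth (in_tuple (dd h1)) j)))).
      apply: connect1; apply: glueP; rewrite eHx.
      apply: mem_zip_cat; first by rewrite !size_map.
      apply/orP; right; apply: mem_zip_cat; first by rewrite !size_map -enumT size_enum_ord.
      by rewrite (mem_zip_map inr inl (zip_tnth j)).
    by have := lift _ _ (toc (inr (tnth (in_tuple (dd h1)) j))).
  - move=> [y|j] yn; first by have := lift _ _ (toc (inr y)).
    by move/negP: yn; case; rewrite eHx !mem_cat (map_f inr) ?mem_enum ?orbT.
  - rewrite eHx /= !map_cat -!map_comp; congr (_ ++ (_ ++ _)).
    + apply: zip_map_eq2 => // x y xy; apply/eqP; rewrite /= qbc; apply: connect1.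
      exact: (glueP xy).
    + by rewrite -enumT; exact: (map_dd_tnth (fun y => qb (inr y)) (dd h1)).
    + rewrite -map_dd -map_comp; symmetry.
      by rewrite -enumT; exact: (map_dd_tnth (fun x => qb (inl x)) (dd g2)).
  - move=> z1 z2; transitivity (@bedge (@bquot (bunion_io G H) P0) z1 z2); first by [].
    rewrite qedge; apply/existsP/existsP => [[x /existsP[y /and3P[fx fy exy]]]|[u /existsP[v /and3P[fu fv]]]].
      exists (emb x); apply/existsP; exists (emb y); rewrite !femb fx fy /=.
      by move: exy; case: x fx => x0 _; case: y fy => y0 _.
    case: u fu => [[x|j]|[y|j]] fu; case: v fv => [[x'|j']|[y'|j']] fv //= euv.
      by exists (inl x); apply/existsP; exists (inl x'); rewrite fu fv.
    by exists (inr y); apply/existsP; exists (inr y'); rewrite fu fv.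
  - have pm s : pmap (qmap P0) s = map qb s by elim: s => //= x s ->; rewrite qm.
    rewrite /= pm !map_cat -!map_comp dd_cat !map_dd -catA -enumT; congr (_ ++ (_ ++ _)).
    by rewrite -map_dd; exact: (map_dd_tnth (fun y => qb (inr y)) (dd h1)).
  - have pm s : pmap (qmap P0) s = map qb s by elim: s => //= x s ->; rewrite qm.
    rewrite /= pm !map_cat -!map_comp dd_cat !map_dd -catA -enumT; congr (_ ++ (_ ++ _)).
    by rewrite -map_dd; exact: (map_dd_tnth (fun x => qb (inl x)) (dd g2)).
have qs s : map qb (map rep s) = s by rewrite -map_comp (eq_map repK) map_id.
have pA1 : perm_eq (map qb (map inl g1) ++ map qb (map inr h1)) d1.
  by rewrite -map_cat -(qs d1) perm_map // perm_lr.
have pA2 : perm_eq (map qb (map inr h2) ++ map qb (map inl g2)) d2.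
  rewrite -map_cat -(qs d2); apply: perm_map.
  by rewrite perm_catC perm_lr.
have C1 := dd_perm0 gc hP pA2 CZ.
have C2 := dd_perm0 gc hP pA1 (invBG gc C1).
exact: (invBG gc C2).
Qed.

Lemma gen_gc (Gens : bgraph -> Prop) : graph_category (gen_cat Gens).
Proof.
split.
- move=> G H iGH CG D gD sub; case: (gD) => isoD _ _ _ _; exact: isoD iGH (CG D gD sub).
- split=> D gD _; by case: gD => _ [].
- move=> K H CK CH D gD sub; case: (gD) => _ _ tD _ _; exact: tD (CK D gD sub) (CH D gD sub).
- move=> H K CH CK sz D gD sub; case: (gD) => _ _ _ cD _; exact: cD (CH D gD sub) (CK D gD sub) sz.
- move=> K CK D gD sub; case: (gD) => _ _ _ _ iD; exact: iD (CK D gD sub).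
Qed.

Lemma gen_sub (Gens : bgraph -> Prop) G : Gens G -> gen_cat Gens G.
Proof. by move=> gG D _ sub; exact: sub. Qed.

Lemma Pgt_gt (D : bgraph -> Prop) : group_theoretical D -> D bPgt.
Proof.
case=> gD qD; case: (gD) => isoD [M11 M02 Z0] tD _ iD.
have M20 : D (bM 2 0) := iD _ M02.
pose T0 := btensor (btensor (bM 0 2) (bM 1 1)) (bM 2 0).
have DT : D T0 by apply: (tD) => //; exact: (tD).
pose f (v : bV T0) : bool := if v is inl (inr _) then false else true.
pose P := preim_partition f [set: bV T0].
have := qD T0 P DT (preim_partitionP f _); apply: isoD.
apply: (@quot_iso T0 bPgt P f (fun b => if b then inl (inl tt) else inl (inr tt))).
- exact: preim_partitionP.
- by case.
- move=> x y; rewrite pblock_equivalence_partition ?inE //.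
  move=> a b c _ _ _; split => //; by move/eqP->.
- move=> z1 z2; apply/esym/existsP => -[x /existsP[y /and3P[_ _]]].
  by case: x => [[[]|[]]|[]]; case: y => [[[]|[]]|[]].
- by [].
- by [].
Qed.

Theorem proposition2p32 (S : bgraph -> Prop) :
  (forall K, S K -> forall v : bV K, (v \in binp K) || (v \in bout K)) ->
  group_theoretical (gen_cat (fun G => G = bPgt \/ S G)) /\
  (forall G, gen_cat (fun G => G = bPgt \/ S G) G <-> gen_gt_cat S G).
Proof.
move=> Slab.
set Gens := fun G => G = bPgt \/ S G.
set C := gen_cat Gens.
have gc : graph_category C := gen_gc Gens.
have hP : C bPgt by apply: gen_sub; left.
pose C' G := C G /\ Eprop C G.
have gc' : graph_category C'.
  case: (gc) => isoC [M11 M02 Z0] tC cC iC; split.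
  - move=> G H iGH [CG EG]; split; [exact: isoC iGH CG | exact: E_iso iGH EG].
  - split.
    + split=> //; apply: FL_E => //; case; by rewrite /= in_cons eqxx.
    + split=> //; apply: FL_E => //; case; by rewrite /= in_cons eqxx.
    + split=> //; apply: FL_E => //; by case.
  - move=> K H [CK EK] [CH EH]; split; [exact: tC | exact: E_tensor].
  - move=> H K [CH EH] [CK EK] sz; split; [exact: cC | exact: E_comp].
  - move=> K [CK EK]; split; [exact: iC | exact: E_inv].
have sub' : forall G, Gens G -> C' G.
  move=> G gG; split; first exact: gen_sub.
  case: gG => [->|SG].
    by apply: FL_E => //; case.
  apply: FL_E => //; last exact: Slab.
  by apply: gen_sub; right.
have CC' G : C G -> C' G by move=> CG; exact: CG C' gc' sub'.
have gtC : group_theoretical C.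
  split=> // K P CK partP; have [_ EK] := CC' K CK; exact: quotE gc hP EK partP.
split=> // G; split.
- move=> CG D gtD SD; apply: CG; first exact: gtD.1.
  by move=> H [->|SH]; [exact: Pgt_gt | exact: SD].
- by move=> gG; apply: gG => // H SH; apply: gen_sub; right.
Qed.
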